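(* Consider a Fisher market with $n$ agents, a finite set $M$ of indivisible items, budgets $b_1,\dots,b_n>0$ that are pairwise distinct, and each agent having a lexicographic preference over $2^M$. Then a competitive equilibrium exists.
   Context: A preference $\preceq_i$ on $2^M$ is lexicographic if there is a strict order $\succ^*_i$ on items such that for $S\ne T$, $S\succ_i T$ iff the $\succ^*_i$-maximal item of $S\setminus T$ is $\succ^*_i$-preferred to the $\succ^*_i$-maximal item of $T\setminus S$ (trivially true when $T\setminus S=\emptyset$). Given item prices $p$ with $p(S)=\sum_{j\in S}p_j$, a bundle $S$ is demanded by agent $i$ if $p(S)\le b_i$ and $p(T)>b_i$ for every $T$ with $S\prec_i T$. A competitive equilibrium is a pair $(\mathcal S,p)$ with $\mathcal S=(S_1,\dots,S_n)$ a partition of all of $M$ among the agents (parts may be empty) such that $S_i$ is demanded by agent $i$ at prices $p$ for every $i$. *)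

(* Defs.v *)
From mathcomp Require Import all_boot all_order all_algebra.
From mathcomp Require Import reals.
Set Implicit Arguments. Unset Strict Implicit. Unset Printing Implicit Defensive.
Import Order.TTheory GRing.Theory Num.Theory.
Local Open Scope ring_scope.

Definition strict_total_order (M : finType) (o : rel M) : Prop :=
  [/\ irreflexive o, transitive o & forall x y, x != y -> o x y || o y x].

Definition maxItem (M : finType) (o : rel M) (A : {set M}) (j : M) : Prop :=
  j \in A /\ forall k, k \in A -> k != j -> o j k.

Definition lex_pref (M : finType) (o : rel M) (S T : {set M}) : Prop :=
  S <> T /\
  (T :\: S = set0 \/
   exists j k, [/\ maxItem o (S :\: T) j, maxItem o (T :\: S) k & o j k]).

Definition lexicographic (M : finType) (pref : {set M} -> {set M} -> Prop) : Prop :=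
  exists o : rel M, strict_total_order o /\
    forall S T, pref S T <-> lex_pref o S T.

Definition price (R : realType) (M : finType) (p : M -> R) (S : {set M}) : R :=
  \sum_(j in S) p j.

Definition demanded (R : realType) (M : finType)
    (pref : {set M} -> {set M} -> Prop) (b : R) (p : M -> R) (S : {set M}) : Prop :=
  price p S <= b /\ forall T, pref T S -> b < price p T.

Definition is_allocation (n : nat) (M : finType) (S : 'I_n -> {set M}) : Prop :=
  (forall i i', i != i' -> [disjoint S i & S i']) /\
  \bigcup_(i < n) S i = [set: M].

Definition competitive_equilibrium (R : realType) (n : nat) (M : finType)
    (pref : 'I_n -> {set M} -> {set M} -> Prop) (b : 'I_n -> R)
    (S : 'I_n -> {set M}) (p : M -> R) : Prop :=
  is_allocation S /\ (forall j, 0 <= p j) /\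
  forall i, demanded (pref i) (b i) p (S i).

(* Main.v *)
Require Import Defs.
From mathcomp Require Import all_boot all_order all_algebra.
From mathcomp Require Import reals.
Import Order.TTheory GRing.Theory Num.Theory.
Local Open Scope ring_scope.

Lemma lex_not_sub (M : finType) (o : rel M) (T S : {set M}) :
  lex_pref o T S -> ~~ (T \subset S).
Proof.
case=> neq [/eqP|[j [k [[jT _] _ _]]]].
- rewrite setD_eq0 => ST; apply/negP => TS; apply: neq; apply/eqP.
  by rewrite eqEsubset TS ST.
- apply/negP => /subsetP TS; move: jT; rewrite inE => /andP[jnS jT].
  by rewrite (TS _ jT) in jnS.
Qed.

Lemma lex_top (M : finType) (o : rel M) (T S : {set M}) a :
  strict_total_order o -> a \in S -> a \notin T ->
  (forall y, y \in T -> y != a -> o a y) -> ~ lex_pref o T S.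
Proof.
case=> irr tr tot aS aT top [_ [/eqP|[j [k [[jT _] [kS kmax] jk]]]]].
- rewrite setD_eq0 => /subsetP ST. by move: aT; rewrite (ST _ aS).
- move: jT; rewrite inE => /andP[jS jT].
  have ja : j != a by apply/eqP => eja; subst; rewrite jT in aT.
  have aj := top _ jT ja.
  have ak := tr _ _ _ aj jk.
  have aSm : a \in S :\: T by rewrite inE aT aS.
  have [ka|kna] := eqVneq k a.
  + by subst k; move: (irr a); rewrite ak.
  + have := kmax a aSm; rewrite eq_sym => /(_ kna) ka.
    by move: (irr a); rewrite (tr _ _ _ ak ka).
Qed.

Arguments lex_not_sub {M o T S}.
Arguments lex_top {M o T S a}.

Lemma top_exists (M : finType) (o : rel M) (X : {set M}) x0 :
  strict_total_order o -> x0 \in X ->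
  exists2 a, a \in X & forall y, y \in X -> y != a -> o a y.
Proof.
case=> irr tr tot x0X.
pose F a := #|[set y in X | o a y]|.
case: (@arg_maxnP _ x0 (mem X) F x0X) => a aX amax.
exists a => // y yX ya; apply/negPn/negP => nay.
have ya' : o y a by move: (tot _ _ ya); rewrite (negbTE nay) orbF.
have : (F a < F y)%N.
  apply: proper_card; apply/properP; split.
  - apply/subsetP => z; rewrite !inE => /andP[zX az]; rewrite zX /=.
    exact: tr ya' az.
  - exists a; first by rewrite inE ya' andbT.
    by rewrite inE irr andbF.
by rewrite ltnNge (amax _ yX : (F y <= F a)%N).
Qed.

Lemma exists_max (R : realType) (I : finType) (A : {set I}) (b : I -> R) i0 :
  i0 \in A -> exists2 r, r \in A & forall i, i \in A -> b i <= b r.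
Proof.
move=> i0A.
have := @extremumP R I (fun x y => y <= x) i0 (mem A) b.
case.
- by move=> x /=.
- by move=> x y z /= yx zy; apply: le_trans zy yx.
- by move=> x y /=; rewrite le_total.
- done.
- by move=> r rA rmax; exists r.
Qed.

Section Gen.
Variables (R : realType) (n : nat) (M : finType)
    (pref : 'I_n -> {set M} -> {set M} -> Prop) (b : 'I_n -> R).
Hypothesis hb : forall i, 0 < b i.
Hypothesis hd : forall i i', i != i' -> b i != b i'.
Hypothesis hl : forall i, lexicographic (pref i).

Definition good (A : {set 'I_n}) (X : {set M}) (S : 'I_n -> {set M}) (p : M -> R) :=
  [/\ (forall i, i \in A -> S i \subset X),
      (forall i i', i \in A -> i' \in A -> i != i' -> [disjoint S i & S i']),
      (forall j, j \in X -> exists2 i, i \in A & j \in S i),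
      (forall j, j \in X -> 0 < p j) &
      (forall i, i \in A -> price p (S i) <= b i) /\
      (forall i (T : {set M}), i \in A -> T \subset X -> pref i T (S i) -> b i < price p T)].

Lemma price_ge (p : M -> R) (X T : {set M}) j : (forall j, j \in X -> 0 < p j) ->
  T \subset X -> j \in T -> p j <= price p T.
Proof.
move=> pos /subsetP TX jT; rewrite /price (bigD1 j jT) /= lerDl.
by apply: sumr_ge0 => k /andP[kT _]; exact/ltW/pos/TX.
Qed.

Lemma price_gt2 (p : M -> R) (X T : {set M}) j k : (forall j, j \in X -> 0 < p j) ->
  T \subset X -> j \in T -> k \in T -> k != j -> p j < price p T.
Proof.
move=> pos TX jT kT kj; rewrite /price (bigD1 j jT) /= ltrDl.
rewrite (bigD1 k) /=; last by apply/andP; split.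
apply: (lt_le_trans (pos k _)); first by apply: (subsetP TX).
rewrite lerDl; apply: sumr_ge0 => l /andP[/andP[lT _] _].
by apply/ltW/pos/(subsetP TX).
Qed.

Arguments price_ge {p X T j}.
Arguments price_gt2 {p X T j k}.

Lemma gen k : forall (A : {set 'I_n}) (X : {set M}), #|A| = k.+1 ->
  exists S p, good A X S p.
Proof.
elim: k => [|k IH] A X cA.
- have /cards1P [r ->] : #|A| == 1%N by rewrite cA.
  pose c := b r / (#|X|.+1)%:R.
  have c0 : 0 < c by rewrite divr_gt0 // ltr0n.
  exists (fun _ => X), (fun _ => c); split.
  + by [].
  + by move=> i i'; rewrite !inE => /eqP -> /eqP ->; rewrite eqxx.
  + by move=> j jX; exists r; rewrite ?inE.
  + by [].
  + split.
    * move=> i; rewrite inE => /eqP ->; rewrite /price sumr_const -mulr_natr.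
      apply: (@le_trans _ _ (c * (#|X|.+1)%:R)).
      - by rewrite ler_wpM2l ?ltW // ltr_nat.
      - by rewrite /c divfK ?pnatr_eq0.
    * move=> i T; rewrite inE => /eqP -> TX.
      have [o [_ ho]] := hl r.
      by move/ho/lex_not_sub; rewrite TX.
- have [i0 i0A] : exists i0, i0 \in A.
    by apply/set0Pn; rewrite -card_gt0 cA.
  have [r rA rmax] := @exists_max R _ A b i0 i0A.
  have [o [ost ho]] := hl r.
  have [X0|[x0 x0X]] := set_0Vmem X.
  + subst X. exists (fun _ => set0), (fun _ => 1); split.
    * by move=> *; exact: sub0set.
    * by move=> *; rewrite -setI_eq0 set0I.
    * by move=> j; rewrite inE.
    * by move=> j; rewrite inE.
    * split.
      - by move=> i _; rewrite /price big_set0 ltW.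
      - move=> i T _; rewrite subset0 => /eqP ->.
        have [o' [_ ho']] := hl i.
        by move/ho' => [].
  + have [a aX atop] := @top_exists M o X x0 ost x0X.
    set A' := A :\ r. set X' := X :\ a.
    have cA' : #|A'| = k.+1 by move: cA; rewrite (cardsD1 r) rA add1n => [[]].
    have [S' [p' [sub' dis' cov' pos' [pr' pf']]]] := IH A' X' cA'.
    have brlt : forall i, i \in A -> i != r -> b i < b r.
      by move=> i iA ir; rewrite lt_neqAle rmax // andbT; exact: hd.
    have S'na : forall i, i \in A' -> a \notin S' i.
      by move=> i iA'; apply/negP => /(subsetP (sub' _ iA')); rewrite !inE eqxx.
    pose S i := if i == r then [set a] else S' i.
    pose p j := if j == a then b r else p' j.
    have pa : p a = b r by rewrite /p eqxx.
    have posp : forall j, j \in X -> 0 < p j.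
      move=> j jX; rewrite /p; case: eqP => [_|/eqP ja]; first exact: hb.
      by apply: pos'; rewrite !inE ja.
    have eqp : forall T : {set M}, a \notin T -> price p T = price p' T.
      move=> T aT; apply: eq_bigr => j jT; rewrite /p ifN //.
      by apply: contraNneq aT => <-.
    have inA' : forall i, i \in A -> i != r -> i \in A'.
      by move=> i iA ir; rewrite !inE ir.
    exists S, p; split.
    * move=> i iA; rewrite /S; case: eqP => [_|/eqP ir]; first by rewrite sub1set.
      apply: subset_trans (sub' _ (inA' _ iA ir)) _; exact: subD1set.
    * move=> i i' iA i'A ii'; rewrite /S.
      case: eqP => [ir|/eqP ir]; case: eqP => [i'r|/eqP i'r].
      - by subst; rewrite eqxx in ii'.
      - by rewrite disjoints1 S'na ?inA'.
      - by rewrite disjoint_sym disjoints1 S'na ?inA'.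
      - by apply: dis' => //; apply: inA'.
    * move=> j jX; case: (eqVneq j a) => [->|ja].
      - by exists r => //; rewrite /S eqxx inE.
      - have jX' : j \in X' by rewrite !inE ja.
        have [i iA' jS] := cov' j jX'.
        move: iA'; rewrite !inE => /andP[ir iA]; exists i => //.
        by rewrite /S (negbTE ir).
    * exact: posp.
    * split.
      - move=> i iA; rewrite /S; case: eqP => [->|/eqP ir].
        + by rewrite /price big_set1 pa.
        + by rewrite eqp ?S'na ?inA' // pr' ?inA'.
      - move=> i T iA TX; rewrite /S; case: eqP => [->|/eqP ir].
        + move/ho => hT; case: (boolP (a \in T)) => aT.
          * have /subsetPn [j jT jna] := lex_not_sub hT.
            have jna' : j != a by move: jna; rewrite inE.
            have := price_gt2 posp TX aT jT jna'.
            by rewrite pa.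
          * exfalso; apply: (lex_top ost _ aT _ hT); first by rewrite inE.
            move=> y yT ya; apply: atop => //; exact: (subsetP TX).
        + move=> hT; case: (boolP (a \in T)) => aT.
          * apply: lt_le_trans (brlt _ iA ir) _.
            by have := price_ge posp TX aT; rewrite pa.
          * rewrite eqp //; apply: pf' => //; first exact: inA'.
            apply/subsetP => y yT; rewrite !inE (subsetP TX _ yT) andbT.
            by apply: contraNneq aT => <-.
Qed.

End Gen.

Theorem mainTheorem10 (R : realType) (n : nat) (M : finType)
    (pref : 'I_n -> {set M} -> {set M} -> Prop) (b : 'I_n -> R) :
  (0 < n)%N ->
  (forall i, 0 < b i) ->
  (forall i i', i != i' -> b i != b i') ->
  (forall i, lexicographic (pref i)) ->
  exists (S : 'I_n -> {set M}) (p : M -> R), competitive_equilibrium pref b S p.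
Proof.
move=> n0 hb hd hl.
have cn : #|[set: 'I_n]| = n.-1.+1 by rewrite cardsT card_ord prednK.
have [S [p [sub dis cov pos [pr pf]]]] :=
  @gen R n M pref b hb hd hl n.-1 [set: 'I_n] [set: M] cn.
exists S, p; split; [split|split].
- by move=> i i' ii'; apply: dis.
- apply/eqP; rewrite eqEsubset subsetT /=; apply/subsetP => j _.
  have [i _ ji] := cov j (in_setT j).
  by apply/bigcupP; exists i.
- by move=> j; apply/ltW/pos.
- move=> i; split; first exact: pr.
  by move=> T; apply: pf => //; apply: subsetT.
Qed.
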